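(* Let $Y$ be a set. The Lie subring of $A[Y]$ (with bracket $[a,b]=ab-ba$) generated by $Y$ identifies with $R\mathfrak L[Y]$; that is, the Lie ring morphism $R\mathfrak L[Y]\to A[Y]$ sending each $y\in Y$ to $y$ is injective.
   Context: For $s\geq2$, $\Delta_s(Y)=\{(y_1,\dots,y_s)\in Y^s: y_i=y_j\text{ for some }i\neq j\}$. The reduced free algebra $A[Y]$ is the unital associative ring generated by $Y$ subject to $y_1\cdots y_s=0$ for all $s$ and all $(y_i)\in\Delta_s(Y)$. The reduced free Lie ring $R\mathfrak L[Y]$ is the Lie ring (Lie algebra over $\mathbb Z$) generated by $Y$ subject to $[y_1,[y_2,[\cdots[y_{s-1},y_s]\cdots]]]=0$ for all $s$ and all $(y_i)\in\Delta_s(Y)$. *)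

(* Defs.v *)
From HB Require Import structures.
From mathcomp Require Import all_boot all_order all_algebra.
Set Implicit Arguments. Unset Strict Implicit. Unset Printing Implicit Defensive.
Import GRing.Theory.
Local Open Scope ring_scope.

(* A finite sequence of elements of Y has a repetition: (y_1,...,y_s) in
   Delta_s(Y), i.e. y_i = y_j for some i <> j.  (Y is an arbitrary type,
   no decidable equality is needed.) *)
Definition has_repeat (Y : Type) (s : seq Y) : Prop :=
  exists (a b c : seq Y) (x : Y), s = a ++ x :: b ++ x :: c.

Definition is_lie_bracket (L : zmodType) (br : L -> L -> L) : Prop :=
  [/\ (forall x y z, br (x + y) z = br x z + br y z),
      (forall x y z, br x (y + z) = br x y + br x z),
      (forall x, br x x = 0) &
      (forall x y z, br x (br y z) + br y (br z x) + br z (br x y) = 0)].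

Definition is_lie_morph (L M : zmodType) (brL : L -> L -> L)
    (brM : M -> M -> M) (f : L -> M) : Prop :=
  (forall x y, f (x + y) = f x + f y) /\
  (forall x y, f (brL x y) = brM (f x) (f y)).

Fixpoint rnest (L : zmodType) (br : L -> L -> L) (s : seq L) : L :=
  match s with
  | [::] => 0
  | [:: x] => x
  | x :: t => br x (rnest br t)
  end.

Definition is_ring_morph (A M : pzRingType) (f : A -> M) : Prop :=
  [/\ (forall x y, f (x + y) = f x + f y),
      (forall x y, f (x * y) = f x * f y) &
      f 1 = 1].

Definition alg_relations (Y : Type) (A : pzRingType) (i : Y -> A) : Prop :=
  forall s : seq Y, has_repeat s -> \prod_(y <- s) i y = 0.

(* (A, i) is the reduced free algebra A[Y]: the unital associative ring
   presented by generators Y and the relations above (universal property). *)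
Definition is_reduced_free_algebra (Y : Type) (A : pzRingType) (i : Y -> A)
  : Prop :=
  alg_relations i /\
  forall (M : pzRingType) (g : Y -> M), alg_relations g ->
    exists f : A -> M, [/\ is_ring_morph f, (forall y, f (i y) = g y) &
      forall f' : A -> M, is_ring_morph f' -> (forall y, f' (i y) = g y) ->
        forall a, f' a = f a].

Definition lie_relations (Y : Type) (L : zmodType) (br : L -> L -> L)
    (i : Y -> L) : Prop :=
  forall s : seq Y, has_repeat s -> rnest br (map i s) = 0.

Definition is_reduced_free_lie (Y : Type) (L : zmodType) (br : L -> L -> L)
    (i : Y -> L) : Prop :=
  [/\ is_lie_bracket br, lie_relations br i &
  forall (M : zmodType) (brM : M -> M -> M) (g : Y -> M),
    is_lie_bracket brM -> lie_relations brM g ->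
    exists f : L -> M, [/\ is_lie_morph br brM f, (forall y, f (i y) = g y) &
      forall f' : L -> M, is_lie_morph br brM f' -> (forall y, f' (i y) = g y) ->
        forall a, f' a = f a]].

Definition commr (A : pzRingType) (a b : A) : A := a * b - b * a.

(* Main.v *)
Require Import Defs.
From HB Require Import structures.
From mathcomp Require Import all_boot all_order all_algebra.
From mathcomp Require Import boolp.
Set Implicit Arguments. Unset Strict Implicit. Unset Printing Implicit Defensive.
Import GRing.Theory.
Local Open Scope ring_scope.

Definition addf (U V : zmodType) (f : U -> V) := forall x y, f (x + y) = f x + f y.

Lemma addf0 (U V : zmodType) (f : U -> V) : addf f -> f 0 = 0.
Proof. by move=> h; apply: (@addrI _ (f 0)); rewrite -h !addr0. Qed.

Lemma addfN (U V : zmodType) (f : U -> V) : addf f -> forall x, f (- x) = - f x.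
Proof.
by move=> h x; apply: (@addrI _ (f x)); rewrite -h !subrr addf0.
Qed.

Lemma addfMn (U V : zmodType) (f : U -> V) : addf f -> forall x n, f (x *+ n) = f x *+ n.
Proof. by move=> h x; elim=> [|n IH]; rewrite ?mulr0n ?addf0 // !mulrS h IH. Qed.

Lemma addfMz (U V : zmodType) (f : U -> V) : addf f -> forall x n, f (x *~ n) = f x *~ n.
Proof.
move=> h x [n|n]; first exact: addfMn.
change (f (- (x *+ n.+1)) = - (f x *+ n.+1)).
by rewrite addfN // addfMn.
Qed.

Record endo (V : zmodType) := Endo { ef :> V -> V; ef_add : addf ef }.

HB.instance Definition _ (V : zmodType) := gen_eqMixin (endo V).
HB.instance Definition _ (V : zmodType) := gen_choiceMixin (endo V).

Lemma endoP (V : zmodType) (f g : endo V) : (forall v, f v = g v) -> f = g.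
Proof.
case: f g => f hf [g hg] /= e.
have efg : f = g by apply: functional_extensionality_dep.
subst g; congr Endo; exact: Prop_irrelevance.
Qed.


Definition e0 (V : zmodType) : endo V := @Endo V (fun _ => 0) (fun _ _ => esym (addr0 0)).
Lemma eadd_proof (V : zmodType) (f g : endo V) : addf (fun v => f v + g v).
Proof. by move=> x y; rewrite !ef_add addrACA. Qed.
Definition eadd (V : zmodType) (f g : endo V) : endo V := Endo (eadd_proof f g).
Lemma eopp_proof (V : zmodType) (f : endo V) : addf (fun v => - f v).
Proof. by move=> x y; rewrite ef_add opprD. Qed.
Definition eopp (V : zmodType) (f : endo V) : endo V := Endo (eopp_proof f).
Definition e1 (V : zmodType) : endo V := @Endo V id (fun _ _ => erefl).
Lemma emul_proof (V : zmodType) (f g : endo V) : addf (fun v => f (g v)).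
Proof. by move=> x y; rewrite !ef_add. Qed.
Definition emul (V : zmodType) (f g : endo V) : endo V := Endo (emul_proof f g).

Lemma eaddA (V : zmodType) : associative (@eadd V).
Proof. by move=> f g h; apply: endoP => v /=; rewrite addrA. Qed.
Lemma eaddC (V : zmodType) : commutative (@eadd V).
Proof. by move=> f g; apply: endoP => v /=; rewrite addrC. Qed.
Lemma eadd0 (V : zmodType) : left_id (@e0 V) (@eadd V).
Proof. by move=> f; apply: endoP => v /=; rewrite add0r. Qed.
Lemma eaddN (V : zmodType) : left_inverse (@e0 V) (@eopp V) (@eadd V).
Proof. by move=> f; apply: endoP => v /=; rewrite addNr. Qed.

HB.instance Definition _ (V : zmodType) :=
  GRing.isZmodule.Build (endo V) (@eaddA V) (@eaddC V) (@eadd0 V) (@eaddN V).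

Lemma emulA (V : zmodType) : associative (@emul V).
Proof. by move=> f g h; apply: endoP. Qed.
Lemma emul1 (V : zmodType) : left_id (@e1 V) (@emul V).
Proof. by move=> f; apply: endoP. Qed.
Lemma emulr1 (V : zmodType) : right_id (@e1 V) (@emul V).
Proof. by move=> f; apply: endoP. Qed.
Lemma emulDl (V : zmodType) : left_distributive (@emul V) (@eadd V).
Proof. by move=> f g h; apply: endoP. Qed.
Lemma emulDr (V : zmodType) : right_distributive (@emul V) (@eadd V).
Proof. by move=> f g h; apply: endoP => v /=; rewrite ef_add. Qed.
Lemma emul0 (V : zmodType) : left_zero (@e0 V) (@emul V).
Proof. by move=> f; apply: endoP. Qed.
Lemma emulr0 (V : zmodType) : right_zero (@e0 V) (@emul V).
Proof. by move=> f; apply: endoP => v /=; rewrite (addf0 (@ef_add _ f)). Qed.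

HB.instance Definition _ (V : zmodType) :=
  GRing.Zmodule_isPzRing.Build (endo V) (@emulA V) (@emul1 V) (@emulr1 V)
    (@emulDl V) (@emulDr V).

Check fun (V : zmodType) => (endo V : pzRingType).
Lemma endo_mulE (V : zmodType) (f g : endo V) v : (f * g) v = f (g v). Proof. by []. Qed.
Lemma endo_addE (V : zmodType) (f g : endo V) v : (f + g) v = f v + g v. Proof. by []. Qed.
Lemma endo_oppE (V : zmodType) (f : endo V) v : (- f) v = - f v. Proof. by []. Qed.
Lemma endo_0E (V : zmodType) v : (0 : endo V) v = 0. Proof. by []. Qed.
Lemma endo_1E (V : zmodType) v : (1 : endo V) v = v. Proof. by []. Qed.

Lemma br_addl (L : zmodType) (br : L -> L -> L) : is_lie_bracket br -> forall z, addf (br^~ z).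
Proof. by case=> h _ _ _ z x y; rewrite h. Qed.
Lemma br_addr (L : zmodType) (br : L -> L -> L) : is_lie_bracket br -> forall x, addf (br x).
Proof. by case=> _ h _ _ x y z; rewrite h. Qed.

Lemma br0r (L : zmodType) (br : L -> L -> L) : is_lie_bracket br -> forall x, br x 0 = 0.
Proof. by move=> h x; rewrite (addf0 (br_addr h x)). Qed.
Lemma br0l (L : zmodType) (br : L -> L -> L) : is_lie_bracket br -> forall x, br 0 x = 0.
Proof. by move=> h x; rewrite (addf0 (br_addl h x)). Qed.
Lemma brNr (L : zmodType) (br : L -> L -> L) : is_lie_bracket br -> forall x y, br x (- y) = - br x y.
Proof. by move=> h x y; rewrite (addfN (br_addr h x)). Qed.
Lemma brNl (L : zmodType) (br : L -> L -> L) : is_lie_bracket br -> forall x y, br (- x) y = - br x y.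
Proof. by move=> h x y; rewrite (addfN (br_addl h y)). Qed.
Lemma brC (L : zmodType) (br : L -> L -> L) : is_lie_bracket br -> forall x y, br x y = - br y x.
Proof.
move=> h x y; case: (h) => hl hr ha _; have := ha (x + y).
rewrite hl !hr !ha add0r addr0 => /eqP.
by rewrite addr_eq0 => /eqP.
Qed.
Lemma jac2 (L : zmodType) (br : L -> L -> L) : is_lie_bracket br ->
  forall x y z, br (br x y) z = br x (br y z) - br y (br x z).
Proof.
move=> h x y z; case: (h) => _ _ _ hj; have := hj x y z.
move/eqP; rewrite addr_eq0 => /eqP.
move=> e; rewrite (brC h (br x y)) -e.
by rewrite (brC h z x) (brNr h).
Qed.

Lemma commr_lie (A : pzRingType) : is_lie_bracket (@commr A).
Proof.
rewrite /commr; split.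
- by move=> x y z; rewrite mulrDl mulrDr opprD addrACA.
- by move=> x y z; rewrite mulrDl mulrDr opprD addrACA.
- by move=> x; rewrite subrr.
move=> x y z; rewrite !mulrBr !mulrBl !mulrA.
set a := x * y * z; set b := x * z * y; set c := y * z * x; set d := z * y * x.
set e := y * x * z; set f := z * x * y.
rewrite !opprB.
rewrite !addrA !subrK.
by rewrite [a - b + d - e + b]addrAC [a - b + d + b]addrAC subrK [a + d - e - d]addrAC addrK subrK subrr.
Qed.

Lemma rnest_cons (L : zmodType) (br : L -> L -> L) x t :
  t != [::] -> rnest br (x :: t) = br x (rnest br t).
Proof. by case: t. Qed.

Lemma morph_add (L M : zmodType) (brL : L -> L -> L) (brM : M -> M -> M) f :
  is_lie_morph brL brM f -> addf f.
Proof. by case. Qed.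

Lemma morph_rnest (L M : zmodType) (brL : L -> L -> L) (brM : M -> M -> M) f :
  is_lie_morph brL brM f -> forall s, f (rnest brL s) = rnest brM (map f s).
Proof.
move=> hf; elim=> [|x [|y t] IH] /=; first exact: (addf0 (morph_add hf)).
  by [].
by rewrite hf.2 IH.
Qed.

Definition consy (Y : Type) (y : Y) (t : seq Y) := if t is [::] then [::] else y :: t.

Definition Rn (Y : Type) (L : zmodType) (br : L -> L -> L) (iL : Y -> L) s :=
  rnest br (map iL s).

Lemma Rn_consy (Y : Type) (L : zmodType) (br : L -> L -> L) (iL : Y -> L) :
  is_lie_bracket br -> forall y t, Rn br iL (consy y t) = br (iL y) (Rn br iL t).
Proof. by move=> hb y [|z t] //=; rewrite br0r. Qed.

Fixpoint rs (Y : Type) (L : zmodType) (br : L -> L -> L) (iL : Y -> L)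
  (r : seq (bool * seq Y)) : L :=
  match r with
  | [::] => 0
  | p :: r' => (if p.1 then - Rn br iL p.2 else Rn br iL p.2) + rs br iL r'
  end.

Definition inspan (Y : Type) (L : zmodType) (br : L -> L -> L) (iL : Y -> L) (a : L) :=
  exists r, a = rs br iL r.

Lemma rs_cat (Y : Type) (L : zmodType) (br : L -> L -> L) (iL : Y -> L) r1 r2 :
  rs br iL (r1 ++ r2) = rs br iL r1 + rs br iL r2.
Proof. by elim: r1 => [|p r IH] /=; rewrite ?add0r // IH addrA. Qed.

Lemma rs_neg (Y : Type) (L : zmodType) (br : L -> L -> L) (iL : Y -> L) r :
  rs br iL (map (fun p => (~~ p.1, p.2)) r) = - rs br iL r.
Proof.
elim: r => [|[[] s] r IH] /=; rewrite ?oppr0 // IH opprD //.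
by rewrite opprK.
Qed.

Lemma inspan0 (Y : Type) (L : zmodType) (br : L -> L -> L) (iL : Y -> L) :
  inspan br iL 0.
Proof. by exists [::]. Qed.
Lemma inspanD (Y : Type) (L : zmodType) (br : L -> L -> L) (iL : Y -> L) a b :
  inspan br iL a -> inspan br iL b -> inspan br iL (a + b).
Proof. by move=> [r1 ->] [r2 ->]; exists (r1 ++ r2); rewrite rs_cat. Qed.
Lemma inspanN (Y : Type) (L : zmodType) (br : L -> L -> L) (iL : Y -> L) a :
  inspan br iL a -> inspan br iL (- a).
Proof. by move=> [r ->]; exists (map (fun p => (~~ p.1, p.2)) r); rewrite rs_neg. Qed.
Lemma inspanR (Y : Type) (L : zmodType) (br : L -> L -> L) (iL : Y -> L) s :
  inspan br iL (Rn br iL s).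
Proof. by exists [:: (false, s)]; rewrite /= addr0. Qed.

Lemma inspan_brRR (Y : Type) (L : zmodType) (br : L -> L -> L) (iL : Y -> L) :
  is_lie_bracket br -> forall s t, inspan br iL (br (Rn br iL s) (Rn br iL t)).
Proof.
move=> hb s; have [n] := ubnP (size s); elim: n s => [|n IH] [|y s'] //= hs t.
  by rewrite br0l //; apply: inspan0.
case: s' hs => [|z s''] hs.
  by rewrite -[Rn br iL [:: y]]/(iL y) -Rn_consy //; apply: inspanR.
have -> : Rn br iL (y :: z :: s'') = br (iL y) (Rn br iL (z :: s'')) by [].
rewrite jac2 //; apply: inspanD; last apply: inspanN.
- have [r ->] := IH (z :: s'') hs t.
  elim: r => [|[b u] r IHr] /=; first by rewrite br0r //; apply: inspan0.
  rewrite (br_addr hb); apply: inspanD => //.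
  case: b; rewrite ?(brNr hb) -Rn_consy //; last exact: inspanR.
  by apply: inspanN; apply: inspanR.
- by rewrite -Rn_consy //; apply: IH.
Qed.

Lemma inspan_br (Y : Type) (L : zmodType) (br : L -> L -> L) (iL : Y -> L) :
  is_lie_bracket br -> forall a b, inspan br iL a -> inspan br iL b ->
  inspan br iL (br a b).
Proof.
move=> hb a b [r1 ->] [r2 ->].
elim: r1 => [|[b1 s] r1 IH] /=; first by rewrite br0l //; apply: inspan0.
rewrite (br_addl hb); apply: inspanD => //; clear IH.
elim: r2 => [|[b2 t] r2 IH2] /=; first by rewrite br0r //; apply: inspan0.
rewrite (br_addr hb); apply: inspanD => //; clear IH2.
case: b1; case: b2; rewrite ?(brNl hb) ?(brNr hb) ?opprK;
  do ?apply: inspanN; exact: inspan_brRR.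
Qed.

Record spT (Y : Type) (L : zmodType) (br : L -> L -> L) (iL : Y -> L) :=
  SpT { spv : L; spP : inspan br iL spv }.

HB.instance Definition _ (Y : Type) (L : zmodType) (br : L -> L -> L) (iL : Y -> L) :=
  gen_eqMixin (spT br iL).
HB.instance Definition _ (Y : Type) (L : zmodType) (br : L -> L -> L) (iL : Y -> L) :=
  gen_choiceMixin (spT br iL).

Lemma spvK (Y : Type) (L : zmodType) (br : L -> L -> L) (iL : Y -> L) (u v : spT br iL) :
  spv u = spv v -> u = v.
Proof.
case: u v => a ha [b hb] /= e; subst b; congr SpT; exact: Prop_irrelevance.
Qed.

Definition sp0 (Y : Type) (L : zmodType) (br : L -> L -> L) (iL : Y -> L) : spT br iL :=
  SpT (inspan0 br iL).
Definition spadd (Y : Type) (L : zmodType) (br : L -> L -> L) (iL : Y -> L) (u v : spT br iL) :=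
  SpT (inspanD (spP u) (spP v)).
Definition spopp (Y : Type) (L : zmodType) (br : L -> L -> L) (iL : Y -> L) (u : spT br iL) :=
  SpT (inspanN (spP u)).

Lemma spaddA (Y : Type) (L : zmodType) (br : L -> L -> L) (iL : Y -> L) :
  associative (@spadd Y L br iL).
Proof. by move=> *; apply: spvK; rewrite /= addrA. Qed.
Lemma spaddC (Y : Type) (L : zmodType) (br : L -> L -> L) (iL : Y -> L) :
  commutative (@spadd Y L br iL).
Proof. by move=> *; apply: spvK; rewrite /= addrC. Qed.
Lemma spadd0 (Y : Type) (L : zmodType) (br : L -> L -> L) (iL : Y -> L) :
  left_id (sp0 br iL) (@spadd Y L br iL).
Proof. by move=> *; apply: spvK; rewrite /= add0r. Qed.
Lemma spaddN (Y : Type) (L : zmodType) (br : L -> L -> L) (iL : Y -> L) :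
  left_inverse (sp0 br iL) (@spopp Y L br iL) (@spadd Y L br iL).
Proof. by move=> *; apply: spvK; rewrite /= addNr. Qed.

HB.instance Definition _ (Y : Type) (L : zmodType) (br : L -> L -> L) (iL : Y -> L) :=
  GRing.isZmodule.Build (spT br iL) (@spaddA Y L br iL) (@spaddC Y L br iL)
    (@spadd0 Y L br iL) (@spaddN Y L br iL).

Lemma all_inspan (Y : Type) (L : zmodType) (br : L -> L -> L) (iL : Y -> L) :
  is_reduced_free_lie br iL -> forall a, inspan br iL a.
Proof.
case=> hb hrel hu.
pose brS (u v : spT br iL) : spT br iL := SpT (inspan_br hb (spP u) (spP v)).
pose gS (y : Y) : spT br iL := SpT (inspanR br iL [:: y]).
have hvm : is_lie_morph brS br (@spv Y L br iL) by [].
have hbS : is_lie_bracket brS.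
  case: (hb) => h1 h2 h3 h4; split.
  - by move=> *; apply: spvK; rewrite /= h1.
  - by move=> *; apply: spvK; rewrite /= h2.
  - by move=> *; apply: spvK; rewrite /= h3.
  - by move=> *; apply: spvK; rewrite /= h4.
have hrS : lie_relations brS gS.
  move=> s hs; apply: spvK; rewrite (morph_rnest hvm) -map_comp.
  exact: hrel.
have [F [hF hFy _]] := hu _ _ _ hbS hrS.
have [G [hG hGy hGu]] := hu _ _ _ hb hrel.
move=> a.
have e1 : a = G a by apply: (hGu id).
have e2 : spv (F a) = G a.
  apply: (hGu (fun b => spv (F b))) => [|y]; last by rewrite hFy.
  by split=> x y /=; rewrite ?hF.1 ?hF.2.
by rewrite e1 -e2; apply: spP.
Qed.

Definition brD (L : zmodType) (br : L -> L -> L) (u v : L * L) : L * L :=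
  (br u.1 v.1, br u.1 v.2 + br u.2 v.1).

Lemma pair0 (U V : zmodType) (x : U * V) : x.1 = 0 -> x.2 = 0 -> x = 0.
Proof. by case: x => ? ? /= -> ->. Qed.

Lemma pairD (U V : zmodType) (a c : U) (b d : V) : (a, b) + (c, d) = (a + c, b + d).
Proof. by []. Qed.

Lemma brD_lie (L : zmodType) (br : L -> L -> L) :
  is_lie_bracket br -> is_lie_bracket (brD br).
Proof.
move=> hb; case: (hb) => h1 h2 h3 hj; split.
- move=> [a m] [b n] [c p]; rewrite /brD /=.
  by rewrite pairD !h1 addrACA.
- move=> [a m] [b n] [c p]; rewrite /brD /=.
  by rewrite pairD !h2 addrACA.
- by move=> [a m]; apply: pair0; rewrite /brD /= ?h3 // (brC hb m) subrr.
move=> [a m] [b n] [c p]; apply: pair0; rewrite /brD /=; first exact: hj.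
rewrite !(br_addr hb) !addrA.
have J1 := hj m b c; have J2 := hj a n c; have J3 := hj a b p.
by rewrite (ACl ((3*4*8)*(2*6*7)*(1*5*9)))%AC /= J1 J2 J3 !addr0.
Qed.

Definition cnt (Y : Type) (x : Y) (s : seq Y) := count (fun y => `[< y = x >]) s.

Lemma rnest_gx (Y : Type) (L : zmodType) (br : L -> L -> L) (iL : Y -> L) (x : Y) :
  is_lie_bracket br -> forall s,
  rnest (brD br) (map (fun y => (iL y, iL y *+ `[< y = x >])) s)
  = (Rn br iL s, Rn br iL s *+ cnt x s).
Proof.
move=> hb; elim=> [|y [|z t] IH]; [by [] | by rewrite /= /cnt /= addn0 |].
rewrite map_cons rnest_cons // IH /brD /=; congr pair.
rewrite (addfMn (br_addr hb _)) (addfMn (br_addl hb _)) -mulrnDr addnC.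
by [].
Qed.

Lemma Dx_exists (Y : Type) (L : zmodType) (br : L -> L -> L) (iL : Y -> L) :
  is_reduced_free_lie br iL -> forall x : Y, exists D : L -> L,
  [/\ addf D, (forall a b, D (br a b) = br a (D b) + br (D a) b) &
      (forall s, D (Rn br iL s) = Rn br iL s *+ cnt x s)].
Proof.
move=> hL x; case: (hL) => hb hrel hu.
pose gx y := (iL y, iL y *+ `[< y = x >]).
have hrD : lie_relations (brD br) gx.
  by move=> s hs; rewrite rnest_gx // /Rn hrel // mul0rn.
have [F [hF hFy _]] := hu _ _ _ (brD_lie hb) hrD.
have [G [hG hGy hGu]] := hu _ _ _ hb hrel.
have e1 : forall a, (F a).1 = a.
  move=> a; rewrite (hGu (fun b => (F b).1)); first by rewrite -(hGu id).
  - by split=> u v /=; rewrite ?hF.1 ?hF.2.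
  by move=> y; rewrite hFy.
exists (fun a => (F a).2); split.
- by move=> u v; rewrite hF.1.
- by move=> u v; rewrite hF.2 /brD /= !e1.
move=> s; rewrite /Rn (morph_rnest hF) -map_comp.
rewrite (eq_map (g := gx)); last by move=> y /=; rewrite hFy.
by rewrite rnest_gx.
Qed.

Lemma has_repeat_cons (Y : Type) (y : Y) t : has_repeat t -> has_repeat (y :: t).
Proof. by case=> a [b [c [z ->]]]; exists (y :: a), b, c, z. Qed.

Lemma has_repeat_catr (Y : Type) (s t : seq Y) : has_repeat s -> has_repeat (s ++ t).
Proof.
by case=> a [b [c [z ->]]]; exists a, b, (c ++ t), z; rewrite -catA /= -catA.
Qed.

Lemma split_in (Y : Type) (x : Y) t : (0 < cnt x t)%N -> exists b c, t = b ++ x :: c.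
Proof.
elim: t => [|y t IH] //=; rewrite /cnt /=.
case: (asboolP (y = x)) => [-> _|_]; first by exists [::], t.
rewrite add0n => /IH [b [c ->]]; by exists (y :: b), c.
Qed.

Lemma cnt2_rep (Y : Type) (x : Y) t : (1 < cnt x t)%N -> has_repeat t.
Proof.
elim: t => [|y t IH] //=; rewrite /cnt /=.
case: (asboolP (y = x)) => [-> /= h|_ /= h].
  have [b [c ->]] := split_in h; by exists [::], b, c, x.
by apply: has_repeat_cons; apply: IH; rewrite add0n in h.
Qed.

Definition Ad (Y : Type) (L : zmodType) (br : L -> L -> L) (iL : Y -> L) s (l : L) :=
  foldr (fun y acc => br (iL y) acc) l s.

Lemma Ad_add (Y : Type) (L : zmodType) (br : L -> L -> L) (iL : Y -> L) :
  is_lie_bracket br -> forall s, addf (Ad br iL s).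
Proof. by move=> hb; elim=> [|y s IH] u v //=; rewrite IH (br_addr hb). Qed.

Lemma Ad_R (Y : Type) (L : zmodType) (br : L -> L -> L) (iL : Y -> L) s t :
  (0 < size t)%N -> Ad br iL s (Rn br iL t) = Rn br iL (s ++ t).
Proof.
move=> ht; elim: s => [|y s IH] //=; rewrite IH /Rn map_cons rnest_cons //.
by rewrite -size_eq0 size_map size_cat addn_eq0 negb_and -!lt0n ht orbT.
Qed.

Lemma Ad_rep (Y : Type) (L : zmodType) (br : L -> L -> L) (iL : Y -> L) :
  is_reduced_free_lie br iL -> forall s, has_repeat s -> forall l, Ad br iL s l = 0.
Proof.
move=> hL s hs l; have [r ->] := all_inspan hL l.
case: (hL) => hb hrel _.
elim: r => [|[b t] r IH]; first by rewrite [rs _ _ _]/= (addf0 (@Ad_add _ _ _ iL hb s)).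
rewrite [rs _ _ _]/= (@Ad_add _ _ _ iL hb) IH addr0.
have e : Ad br iL s (Rn br iL t) = 0.
  case: t => [|z t]; last by rewrite Ad_R // /Rn hrel //; apply: has_repeat_catr.
  have -> : Rn br iL [::] = 0 by [].
  exact: (addf0 (@Ad_add _ _ _ iL hb s)).
by case: b; rewrite ?(addfN (@Ad_add _ _ _ iL hb s)) e ?oppr0.
Qed.

Definition sig_fun (L : zmodType) (br : L -> L -> L) (D : L -> L) (a : L)
  (v : L * int) : L * int := (br a v.1 + D a *~ v.2, 0).

Lemma sig_add (L : zmodType) (br : L -> L -> L) (D : L -> L) :
  is_lie_bracket br -> forall a, addf (sig_fun br D a).
Proof.
move=> hb a [l n] [l' n']; rewrite pairD /sig_fun /= pairD addr0.
by rewrite (br_addr hb) mulrzDr addrACA.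
Qed.

Definition sigma (L : zmodType) (br : L -> L -> L) (D : L -> L)
  (hb : is_lie_bracket br) (a : L) : endo (L * int)%type :=
  Endo (sig_add D hb a).

Lemma sigmaE (L : zmodType) (br : L -> L -> L) (D : L -> L)
  (hb : is_lie_bracket br) a v : sigma D hb a v = (br a v.1 + D a *~ v.2, 0).
Proof. by []. Qed.

Lemma pairN (U V : zmodType) (a : U) (b : V) : - (a, b) = (- a, - b).
Proof. by []. Qed.

Lemma sigma_morph (L : zmodType) (br : L -> L -> L) (D : L -> L)
  (hb : is_lie_bracket br) : addf D ->
  (forall a b, D (br a b) = br a (D b) + br (D a) b) ->
  is_lie_morph br (@commr _) (sigma D hb).
Proof.
move=> hD hDb; split.
  move=> a b; apply: endoP => -[l n]; rewrite endo_addE !sigmaE pairD addr0 /=.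
  by rewrite (br_addl hb) hD mulrzDl addrACA.
move=> a b; apply: endoP => -[l n]; rewrite /commr endo_addE endo_oppE !endo_mulE.
rewrite !sigmaE /= !mulr0z !addr0 pairN pairD subrr hDb.
rewrite jac2 // mulrzDl (brC hb (D a) b) mulNrz.
rewrite !(br_addr hb) (addfMz (br_addr hb _)) (addfMz (br_addr hb _)).
by rewrite opprD !addrA (ACl (1*3*2*4))%AC.
Qed.

Lemma sigma_prod (Y : Type) (L : zmodType) (br : L -> L -> L) (iL : Y -> L) (D : L -> L)
  (hb : is_lie_bracket br) s z v :
  (\prod_(y <- rcons s z) sigma D hb (iL y)) v =
  (Ad br iL s (br (iL z) v.1 + D (iL z) *~ v.2), 0).
Proof.
elim: s => [|y s IH]; first by rewrite /= big_seq1.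
by rewrite rcons_cons big_cons endo_mulE IH sigmaE /= mulr0z addr0.
Qed.

Lemma sigma_rel (Y : Type) (L : zmodType) (br : L -> L -> L) (iL : Y -> L) (D : L -> L)
  (hL : is_reduced_free_lie br iL) (hb : is_lie_bracket br) (x : Y) :
  (forall s, D (Rn br iL s) = Rn br iL s *+ cnt x s) ->
  alg_relations (fun y => sigma D hb (iL y)).
Proof.
move=> hDs s hs; have hb' := hb.
case: (lastP s) hs => [|s' z] hs.
  by case: hs => a [b [c [w]]]; case: a.
apply: endoP => v; rewrite sigma_prod endo_0E.
rewrite (@Ad_add _ _ _ iL hb) (addfMz (@Ad_add _ _ _ iL hb s')).
have -> : D (iL z) = D (Rn br iL [:: z]) by [].
rewrite hDs (addfMn (@Ad_add _ _ _ iL hb s')) Ad_R //.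
case: (hL) => _ hrel _.
apply: pair0 => //=.
rewrite [Ad _ _ _ (br _ _)](_ : _ = Ad br iL (rcons s' z) v.1); last first.
  by elim: (s') => [|w t IH] //=; rewrite IH.
by rewrite (Ad_rep hL hs) /Rn cats1 hrel // mul0rn mul0rz addr0.
Qed.

Lemma D_kill (Y : Type)
  (A : pzRingType) (iA : Y -> A) (hA : is_reduced_free_algebra iA)
  (L : zmodType) (br : L -> L -> L) (iL : Y -> L)
  (hL : is_reduced_free_lie br iL)
  (phi : L -> A) (hphi : is_lie_morph br (@commr A) phi)
  (hphiY : forall y, phi (iL y) = iA y) (x : Y) :
  exists D : L -> L, [/\ addf D, (forall s, D (Rn br iL s) = Rn br iL s *+ cnt x s)
     & forall a, phi a = 0 -> D a = 0].
Proof.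
have [D [hD hDb hDs]] := Dx_exists hL x.
case: (hL) => hb hrel hu.
exists D; split => // a ha.
have hsm := sigma_morph hb hD hDb.
have [f [hf hfy _]] := hA.2 _ _ (sigma_rel hL hb hDs).
have hfa : addf f by case: hf.
have hfM : forall u v, f (u * v) = f u * f v by case: hf.
have hfm : is_lie_morph br (@commr _) (fun b => f (phi b)).
  split=> u v; first by rewrite hphi.1 hfa.
  by rewrite hphi.2 /commr hfa (addfN hfa) !hfM.
have hrS : lie_relations (@commr _) (fun y => sigma D hb (iL y)).
  move=> s hs; rewrite (map_comp (sigma D hb) iL) -(morph_rnest hsm) hrel //.
  exact: (addf0 hsm.1).
have [F [hF hFy hFu]] := hu _ _ _ (@commr_lie _) hrS.
have e1 : sigma D hb a = F a by apply: (hFu (sigma D hb)).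
have e2 : f (phi a) = F a.
  by apply: (hFu (fun b => f (phi b))) => // y; rewrite hphiY hfy.
have : sigma D hb a (0, 1) = (0 : endo _) (0, 1) by rewrite e1 -e2 ha (addf0 hfa).
by rewrite sigmaE endo_0E /= br0r // add0r => -[].
Qed.

Lemma rs_filter (Y : Type) (L : zmodType) (br : L -> L -> L) (iL : Y -> L) P r :
  rs br iL r = rs br iL (filter P r) + rs br iL (filter (predC P) r).
Proof.
elim: r => [|p r IH] /=; first by rewrite addr0.
by case: (P p) => /=; rewrite IH; [rewrite addrA | rewrite addrCA].
Qed.

Lemma Rn_cnt (Y : Type) (L : zmodType) (br : L -> L -> L) (iL : Y -> L) x s :
  lie_relations br iL ->
  Rn br iL s *+ cnt x s = if (0 < cnt x s)%N then Rn br iL s else 0.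
Proof.
move=> hrel; case: (cnt x s) (@cnt2_rep _ x s) => [|[|c]] //= h.
by rewrite /Rn hrel ?mul0rn //; apply: h.
Qed.

Lemma D_rs (Y : Type) (L : zmodType) (br : L -> L -> L) (iL : Y -> L) x (D : L -> L) :
  lie_relations br iL -> addf D ->
  (forall s, D (Rn br iL s) = Rn br iL s *+ cnt x s) ->
  forall r, D (rs br iL r) = rs br iL (filter (fun p => (0 < cnt x p.2)%N) r).
Proof.
move=> hrel hD hDs; elim=> [|[b s] r IH] /=; first exact: addf0.
rewrite hD IH; case: b; rewrite ?(addfN hD) hDs Rn_cnt //;
  by case: ifP => //= _; rewrite ?oppr0 add0r.
Qed.

Lemma final (Y : Type) (L : zmodType) (br : L -> L -> L) (iL : Y -> L) :
  lie_relations br iL -> forall r,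
  (forall x, exists D : L -> L, [/\ addf D,
     (forall s, D (Rn br iL s) = Rn br iL s *+ cnt x s) & D (rs br iL r) = 0]) ->
  rs br iL r = 0.
Proof.
move=> hrel r; have [n] := ubnP (size r); elim: n r => [|n IH] [|[b s] r] //= hs hx.
case: s hx => [|x s] hx.
  have e : rs br iL ((b, [::]) :: r) = rs br iL r by case: (b) => /=; rewrite /Rn /= ?oppr0 add0r.
  rewrite -[_ + _]/(rs br iL ((b, [::]) :: r)) e; apply: IH => // z.
  by have [D [hD hDs hD0]] := hx z; exists D; split => //; rewrite -e.
set r0 := (b, x :: s) :: r.
have [D [hD hDs hD0]] := hx x.
pose P := fun p : bool * seq Y => (0 < cnt x p.2)%N.
have e : rs br iL r0 = rs br iL (filter (predC P) r0).
  by rewrite (@rs_filter _ _ br iL P r0) -(D_rs hrel hD hDs) hD0 add0r.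
rewrite -[_ + _]/(rs br iL r0) e; apply: IH.
  have : (P (b, x :: s)) by rewrite /P /cnt /= (asboolT (erefl x)).
  rewrite /r0 /= => ->; rewrite /=.
  by rewrite size_filter; apply: (leq_ltn_trans (count_size _ r)); exact: hs.
move=> z; have [D' [hD' hDs' hD0']] := hx z; exists D'; split => //.
by rewrite -e.
Qed.

Unset Implicit Arguments.
Set Strict Implicit.

Theorem proposition2p7 (Y : Type)
  (A : pzRingType) (iA : Y -> A) (hA : is_reduced_free_algebra iA)
  (L : zmodType) (br : L -> L -> L) (iL : Y -> L)
  (hL : is_reduced_free_lie br iL)
  (phi : L -> A) (hphi : is_lie_morph br (@commr A) phi)
  (hphiY : forall y, phi (iL y) = iA y) :
  injective phi.
Proof.
move=> a b e; apply/eqP; rewrite -subr_eq0; apply/eqP.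
have hc : phi (a - b) = 0 by rewrite hphi.1 (addfN hphi.1) e subrr.
have [r er] := all_inspan hL (a - b).
rewrite er; case: (hL) => _ hrel _; apply: final => // x.
have [D [hD hDs hk]] := D_kill hA hL hphi hphiY x.
by exists D; split => //; rewrite -er hk.
Qed.
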